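(* Let $p$ be a prime with $p\notin\{2,3,7,43\}$, and let $n$ be a positive integer divisible by $p$. Then $n\in\mathcal{M}_p^{(1)}$ if and only if $n/p\in\mathcal{W}$, $\mathfrak{n}_{n/p}\mid p$, and $\mathfrak{n}_{n/p}-1\nmid n/p$.
   Context: For positive integers $k,n$ let $S_k(n)=\sum_{i=1}^{n} i^k$. For an integer $a$, $\mathcal{M}_a$ denotes the set of positive integers $n$ such that $S_n(n)\equiv a\pmod{n}$. For a prime $p$, $\mathcal{M}_p^{(1)}=\{n\in\mathcal{M}_p : p\mid n,\ p^2\nmid n\}$. A positive integer $n$ is a weak primary pseudoperfect number if $\sum_{q\mid n,\ q\text{ prime}} \frac{n}{q}+1\equiv 0\pmod{n}$; $\mathcal{W}$ denotes the set of such numbers. For a positive integer $Q$, $\mathfrak{n}_Q=\operatorname{lcm}\{(q-1)/\gcd(q-1,Q) : q\text{ prime},\ q\mid Q\}$ if $Q\neq 1$, and $\mathfrak{n}_1=1$. *)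

(* Defs.v *)
From mathcomp Require Import all_boot.
Set Implicit Arguments. Unset Strict Implicit. Unset Printing Implicit Defensive.

Definition S (k n : nat) : nat := \sum_(1 <= i < n.+1) i ^ k.

(* n \in M_a  (a nonnegative here; only a = p is used) *)
Definition inM (a n : nat) : Prop := 0 < n /\ S n n = a %[mod n].

Definition inM1 (p n : nat) : Prop := inM p n /\ p %| n /\ ~~ (p ^ 2 %| n).

Definition inW (n : nat) : Prop :=
  0 < n /\ (\sum_(q <- primes n) n %/ q) + 1 = 0 %[mod n].

Definition frakn (Q : nat) : nat :=
  if Q == 1 then 1
  else \big[lcmn/1]_(q <- primes Q) ((q - 1) %/ gcdn (q - 1) Q).

(* Main.v *)
Require Import Defs.
From mathcomp Require Import all_boot all_algebra all_fingroup.
From mathcomp Require Import cyclic.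
Set Implicit Arguments. Unset Strict Implicit. Unset Printing Implicit Defensive.

Lemma prim_root q k : prime q -> ~~ (q.-1 %| k) ->
  exists a, coprime a q /\ a ^ k %% q != 1.
Proof.
move=> pq nd.
have q2 : 1 < q by apply: prime_gt1.
case: q pq nd q2 => [|[|q']] // pq nd _.
have /cyclicP [x Hx] := units_Zp_cyclic pq.
have ox : #[x]%g = q'.+1.
  by rewrite /order -Hx card_units_Zp // totient_prime.
exists (val (val x)); split.
  have := valP x. rewrite /= -[X in X \is a _]natr_Zp unitZpE // coprime_sym.
  by [].
apply: contra nd => /eqP h.
rewrite /= -ox order_dvdn; apply/eqP; apply: val_inj; apply: val_inj.
by rewrite unit_Zp_expg /= h.
Qed.
Lemma mul_mod_inj m a i j : coprime a m -> i < m -> j < m ->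
  (a * i) %% m = (a * j) %% m -> i = j.
Proof.
move=> co im jm.
wlog ij : i j im jm / i <= j.
  move=> H h; case: (leqP i j) => [|/ltnW] le; first exact: H.
  by apply/esym/H.
have le : a * i <= a * j by rewrite leq_mul2l ij orbT.
move=> /eqP. rewrite eq_sym (eqn_mod_dvd _ le).
rewrite -mulnBr Gauss_dvdr; last by rewrite coprime_sym.
move=> d.
have : j - i < m by apply: leq_ltn_trans (leq_subr _ _) jm.
case E: (j - i) d => [|k] d lt; first by apply/eqP; rewrite eqn_leq ij -subn_eq0 E.
by move: (dvdn_leq (ltn0Sn _) d); rewrite leqNgt lt.
Qed.

Lemma sum_perm m a k : 0 < m -> coprime a m ->
  \sum_(i < m) ((a * i) %% m) ^ k = \sum_(i < m) i ^ k.
Proof.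
move=> m0 co.
pose h (i : 'I_m) : 'I_m := Ordinal (ltn_pmod (a * i) m0).
have hi : injective h.
  move=> i j /(congr1 val) /= H; apply: val_inj; exact: mul_mod_inj co (ltn_ord i) (ltn_ord j) H.
by rewrite [RHS](reindex_inj hi).
Qed.

Lemma sum_pow_mul m a k : 0 < m -> coprime a m ->
  a ^ k * \sum_(i < m) i ^ k = \sum_(i < m) i ^ k %[mod m].
Proof.
move=> m0 co.
rewrite -[in RHS](sum_perm k m0 co) big_distrr /= -modn_summ -[RHS]modn_summ.
by congr (_ %% _); apply: eq_bigr => i _; rewrite modnXm expnMn.
Qed.

Lemma sum_pow_zero q e k : prime q -> ~~ (q.-1 %| k) ->
  q ^ e %| \sum_(i < q ^ e) i ^ k.
Proof.
move=> pq nd; have [a [co h]] := prim_root pq nd.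
have q1 := prime_gt1 pq.
have m0 : 0 < q ^ e by rewrite expn_gt0 prime_gt0.
have com : coprime a (q ^ e) by rewrite coprimeXr.
have := sum_pow_mul k m0 com.
have a0 : 0 < a.
  case: a co {h com} => // /eqP; rewrite /coprime gcd0n => q1'.
  by move: q1; rewrite q1'.
have := expn_gt0 a k; rewrite a0 /=.
case E: (a ^ k) h => [|b] // h _.
rewrite mulSn; set U := \sum_(i < q ^ e) i ^ k.
rewrite -{3}[U]addn0 => /eqP; rewrite eqn_modDl mod0n => /eqP hh.
have {}hh : q ^ e %| b * U by rewrite /dvdn hh.
have cb : coprime (q ^ e) b.
  rewrite coprimeXl // prime_coprime //; apply: contra h => /dvdnP [c ->].
  by rewrite -addn1 -modnDml modnMl add0n modn_small.
by rewrite -(Gauss_dvdr _ cb).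
Qed.

Lemma sum_pow_tot q e k : prime q -> 0 < e -> 0 < k -> q ^ e %| k -> q.-1 %| k ->
  q ^ e %| \sum_(i < q ^ e) i ^ k + q ^ e.-1.
Proof.
move=> pq e0 k0 dk dq.
have q1 := prime_gt1 pq; have q0 := prime_gt0 pq.
set m := q ^ e.
have ek : e <= k.
  apply: ltnW; apply: leq_trans (ltn_expl e q1) _; exact: dvdn_leq.
have tk : totient m %| k.
  rewrite totient_pfactor // Gauss_dvd ?dq /=.
    by apply: dvdn_trans dk; apply: dvdn_exp2l; apply: leq_pred.
  by rewrite coprimeXr // coprimePn.
have H : \sum_(i < m) i ^ k = \sum_(i < m) coprime m i %[mod m].
  rewrite -modn_summ -[RHS]modn_summ; congr (_ %% _); apply: eq_bigr => i _.
  case: (boolP (coprime m i)) => ci.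
    have := Euler_exp_totient (_ : coprime i m); rewrite coprime_sym => /(_ ci) Eu.
    move/dvdnP: tk => [c ->]; rewrite mulnC expnM -modnXm Eu modnXm exp1n.
    by rewrite modn_small // /m -(expn0 q) ltn_exp2l.
  move: ci; rewrite /m coprime_pexpl // prime_coprime // negbK => /dvdnP [c ->].
  rewrite expnMn /= mod0n; apply/eqP; change (q ^ e %| c ^ k * q ^ k).
  by apply: dvdn_mull; apply: dvdn_exp2l.
have T : totient m = \sum_(i < m) coprime m i by rewrite totient_count_coprime big_mkord.
rewrite /dvdn -modnDml H modnDml -T totient_pfactor //.
rewrite -{2}(mul1n (q ^ e.-1)) -mulnDl addn1 prednK // -expnS prednK //. by rewrite /m modnn.
Qed.
Lemma sum_period m c k : 0 < m ->
  \sum_(0 <= i < m * c) i ^ k = c * \sum_(0 <= i < m) i ^ k %[mod m].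
Proof.
move=> m0; elim: c => [|c IH]; first by rewrite muln0 big_geq.
rewrite mulnS addnC (@big_cat_nat _ _ _ (m * c)) ?leq_addr //=.
rewrite -{2}[m * c]add0n big_addn addKn mulSnr -modnDml IH modnDml.
apply/eqP; rewrite eqn_modDl; apply/eqP.
rewrite -modn_summ -[RHS]modn_summ; congr (_ %% _); apply: eq_bigr => i _.
by rewrite -modnXm (addnC i) (mulnC m) modnMDl modnXm.
Qed.

Lemma S_period k m n : 0 < k -> 0 < n -> 0 < m -> m %| n ->
  S k n = (n %/ m) * \sum_(i < m) i ^ k %[mod m].
Proof.
move=> k0 n0 m0 mn.
rewrite /S big_nat_recr //= -(add0n 1) big_addn subn1 /=.
have -> : \sum_(0 <= i < n.-1) (i + 1) ^ k = \sum_(0 <= i < n) i ^ k.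
  rewrite [RHS]big_ltn // exp0n // add0n -{2}(prednK n0) -[in RHS](add0n 1) big_addn subn1 /=.
  by [].
rewrite -{1}(divnK mn) -modnDm -(mulnC m) sum_period // modnDm.
have nk : n ^ k %% m = 0 by apply/eqP; exact: dvdn_exp k0 mn.
by rewrite -modnDmr nk addn0 big_mkord.
Qed.

Definition T n := \sum_(q <- primes n | q.-1 %| n) n %/ q.

Lemma key n : 0 < n -> n %| S n n + T n.
Proof.
move=> n0; apply/dvdn_partP => // q qpi.
have qp : q \in primes n by [].
move: (qp); rewrite mem_primes => /and3P [pq _ qn].
rewrite p_part; set e := logn q n; set m := q ^ e.
have e0 : 0 < e by rewrite /e logn_gt0.
have mn : m %| n by apply: pfactor_dvdnn.
have m0 : 0 < m by rewrite expn_gt0 prime_gt0.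
set c := n %/ m.
have nmc : n = m * c by rewrite /c mulnC divnK.
have rest : m %| \sum_(r <- primes n | r != q) (if r.-1 %| n then n %/ r else 0).
  rewrite big_seq_cond; apply: dvdn_sum => r /andP [rp rq].
  case: ifP => // _.
  move: rp; rewrite mem_primes => /and3P [pr _ rn].
  have cmr : coprime m r.
    rewrite coprimeXl // prime_coprime // dvdn_prime2 //.
    by rewrite eq_sym.
  by rewrite -(Gauss_dvdr _ cmr) mulnC divnK.
rewrite /T big_mkcond (bigD1_seq q) ?primes_uniq //=.
rewrite /dvdn -modnDml (S_period n0 n0 m0 mn) modnDml -/(dvdn _ _) -/c.
rewrite addnA; apply: dvdn_add => //.
case: ifP => hq.
  have nq : n %/ q = q ^ e.-1 * c.
    by rewrite nmc /m -(prednK e0) expnS -mulnA mulKn ?prime_gt0.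
  rewrite nq (mulnC (q ^ e.-1)) -mulnDr; apply: dvdn_mull.
  apply: sum_pow_tot => //; by rewrite ?hq.
rewrite addn0; apply: dvdn_mull; apply: sum_pow_zero => //; exact: negbT hq.
Qed.
Lemma div_gcd_dvd a p Q : 0 < Q -> a %| p * Q -> a %/ gcdn a Q %| p.
Proof.
move=> Q0 h.
have g0 : 0 < gcdn a Q by rewrite gcdn_gt0 Q0 orbT.
have : a %| p * gcdn a Q.
  rewrite gcdnC muln_gcdr dvdn_gcd h /=; exact: dvdn_mull.
by rewrite -{1}(divnK (dvdn_gcdl a Q)) dvdn_pmul2r.
Qed.

Lemma dvd_div_other r q Q : prime r -> prime q -> r != q -> r %| Q -> q %| Q ->
  r %| Q %/ q.
Proof.
move=> pr pq rq rQ qQ.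
have co : coprime r q by rewrite prime_coprime // dvdn_prime2.
by rewrite -(Gauss_dvdr _ co) mulnC divnK.
Qed.

Lemma lcm_sup (s : seq nat) (F : nat -> nat) x : x \in s ->
  F x %| \big[lcmn/1]_(i <- s) F i.
Proof. by move=> xs; rewrite (big_rem x) //= dvdn_lcml. Qed.

Lemma lcm_dvd (s : seq nat) (F : nat -> nat) d :
  (forall x, x \in s -> F x %| d) -> \big[lcmn/1]_(i <- s) F i %| d.
Proof.
move=> h; rewrite big_seq; apply: (big_ind (fun x => x %| d)) => //.
  by move=> x y hx hy; rewrite dvdn_lcm hx hy.
Qed.
Definition goodL := [:: 1; 2; 6; 42; 1806].
Definition chk1 (Q : nat) := all (fun q => if prime q && (q.-1 %| Q) && ~~ (q %| Q)
  then Q * q \in goodL else true) (iota 0 Q.+2).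
Definition chk2 (Q : nat) := all (fun q => if prime q && ((q.-1 %| Q) || (q %| Q))
  then q \in [:: 2; 3; 7; 43] else true) (iota 0 Q.+2).

Lemma chk1_ok : all chk1 goodL = true.
Proof. vm_compute. reflexivity. Qed.
Lemma chk2_ok : all chk2 goodL = true.
Proof. vm_compute. reflexivity. Qed.

Lemma goodL_pos Q : Q \in goodL -> 0 < Q.
Proof. by rewrite !inE => /orP [/eqP ->|/orP [/eqP ->|/orP [/eqP ->|/orP [/eqP ->|/eqP ->]]]]. Qed.

Lemma chk1_use Q q : Q \in goodL -> prime q -> q.-1 %| Q -> ~~ (q %| Q) ->
  Q * q \in goodL.
Proof.
move=> QL pq d nd.
have /allP /(_ Q QL) /allP /(_ q) := chk1_ok.
rewrite mem_iota add0n pq d nd /=; apply.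
rewrite ltnS -[q]prednK ?prime_gt0 //; exact: dvdn_leq (goodL_pos QL) d.
Qed.

Lemma chk2_use Q q : Q \in goodL -> prime q -> (q.-1 %| Q) || (q %| Q) ->
  q \in [:: 2; 3; 7; 43].
Proof.
move=> QL pq d.
have /allP /(_ Q QL) /allP /(_ q) := chk2_ok.
rewrite mem_iota add0n pq d /=; apply.
have Q0 := goodL_pos QL.
case/orP: d => d.
  rewrite ltnS -[q]prednK ?prime_gt0 //; exact: dvdn_leq Q0 d.
by apply: leq_trans (dvdn_leq Q0 d) _.
Qed.

Lemma enumQ Q : 0 < Q -> (forall r, prime r -> r %| Q -> ~~ (r * r %| Q)) ->
  (forall r, prime r -> r %| Q -> r.-1 %| Q) -> Q \in goodL.
Proof.
elim/ltn_ind: Q => Q IH Q0 sq dv.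
case: (ltnP 1 Q) => [Q1|QL1]; last by have -> : Q = 1 by apply/eqP; rewrite eqn_leq QL1.
set q := max_pdiv Q.
have pq : prime q by apply: max_pdiv_prime.
have qQ : q %| Q by apply: max_pdiv_dvd.
set Q' := Q %/ q.
have QE : Q = Q' * q by rewrite /Q' divnK.
have Q'0 : 0 < Q' by rewrite /Q' divn_gt0 ?prime_gt0 // dvdn_leq.
have Q'lt : Q' < Q by rewrite /Q' ltn_Pdiv ?prime_gt1.
have nq : ~~ (q %| Q').
  apply/negP => h; move: (sq q pq qQ); by rewrite {1}QE (dvdn_mul h (dvdnn q)).
have dv' : forall r, prime r -> r %| Q -> r.-1 %| Q'.
  move=> r pr rQ.
  have rq : r <= q by apply: max_pdiv_max; rewrite mem_primes pr Q0 rQ.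
  have co : coprime r.-1 q.
    rewrite coprime_sym prime_coprime //; apply/negP => h.
    have r1 : 0 < r.-1 by rewrite -ltnS prednK ?prime_gt0 // prime_gt1.
    have rr : r.-1 < r by rewrite ltn_predL prime_gt0.
    by have := leq_trans (leq_ltn_trans (dvdn_leq r1 h) rr) rq; rewrite ltnn.
  by rewrite -(Gauss_dvdl _ co) -QE dv.
have Q'L : Q' \in goodL.
  apply: IH => // r pr rQ'.
    have rQ : r %| Q by rewrite QE dvdn_mulr.
    apply: contra (sq r pr rQ) => h; rewrite QE dvdn_mulr //.
  apply: dv' pr _; rewrite QE dvdn_mulr //.
by rewrite QE; apply: chk1_use => //; apply: dv'.
Qed.

Lemma T_split p Q : prime p -> 0 < Q -> ~~ (p %| Q) ->
  T (p * Q) = (if p.-1 %| p * Q then Q else 0) +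
     p * \sum_(r <- primes Q) (if r.-1 %| p * Q then Q %/ r else 0).
Proof.
move=> pp Q0 pQ.
have n0 : 0 < p * Q by rewrite muln_gt0 prime_gt0.
have pin : p \in primes (p * Q) by rewrite mem_primes pp n0 dvdn_mulr.
rewrite /T big_mkcond (bigD1_seq p pin (primes_uniq _)) /= mulKn ?prime_gt0 //.
congr (_ + _).
rewrite -big_filter (perm_big (primes Q)).
  rewrite big_distrr /=; apply: eq_big_seq => r rQ.
  case: ifP => _; last by rewrite muln0.
  move: rQ; rewrite mem_primes => /and3P [_ _ rQ].
  by rewrite muln_divA.
apply: uniq_perm; [by rewrite filter_uniq ?primes_uniq | exact: primes_uniq |].
move=> r; rewrite mem_filter !mem_primes /= n0 Q0.
case: (boolP (prime r)) => pr /=; last by rewrite andbF.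
case: (eqVneq r p) => [->|rp] /=; first by rewrite (negbTE pQ).
by rewrite Gauss_dvdr // prime_coprime // dvdn_prime2.
Qed.

Theorem mainTheorem18 (p n : nat) :
  prime p -> p \notin [:: 2; 3; 7; 43] -> 0 < n -> p %| n ->
  (inM1 p n <->
   [/\ inW (n %/ p), frakn (n %/ p) %| p & ~~ ((frakn (n %/ p) - 1) %| n %/ p)]).
Proof.
move=> pp pL n0 pn.
set Q := n %/ p.
have nE : n = p * Q by rewrite /Q mulnC divnK.
have p0 := prime_gt0 pp.
have Q0 : 0 < Q by rewrite /Q divn_gt0 // dvdn_leq.
have K := key n0.
split.
- case=> [[_ Sp] [_ np2]].
  have pQ : ~~ (p %| Q) by apply: contra np2; rewrite nE expnS expn1 dvdn_pmul2l.
  have TS := T_split pp Q0 pQ; rewrite -nE in TS.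
  set Sig := \sum_(r <- primes Q) (if r.-1 %| n then Q %/ r else 0) in TS.
  have hT : n %| T n + p by rewrite /dvdn -modnDmr -Sp modnDmr addnC.
  have p1 : ~~ (p.-1 %| n).
    apply/negP => h; move: hT; rewrite TS h => hT.
    have : p %| Q + p * Sig + p by apply: dvdn_trans hT; rewrite nE dvdn_mulr.
    rewrite dvdn_addl // dvdn_addl ?dvdn_mulr // => h2.
    by move/negP: pQ; apply.
  move: hT; rewrite TS (negbTE p1) add0n -mulnSr nE dvdn_pmul2l // => hQ.
  have allr : forall r, r \in primes Q -> r.-1 %| n.
    move=> r rQ; apply/negP => /negP hr.
    move: (rQ); rewrite mem_primes => /and3P [pr _ rQd].
    have rS : r %| Sig.
      rewrite /Sig (bigD1_seq r rQ (primes_uniq _)) /= (negbTE hr) add0n big_seq_cond.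
      apply: dvdn_sum => s /andP [sQ sr]; case: ifP => // _.
      move: sQ; rewrite mem_primes => /and3P [ps _ sQd].
      by apply: dvd_div_other => //; rewrite eq_sym.
    have := dvdn_trans rQd hQ.
    by rewrite -addn1 dvdn_addr // dvdn1 => /eqP r1; move: pr; rewrite r1.
  have SigE : Sig = \sum_(r <- primes Q) Q %/ r.
    by apply: eq_big_seq => r rQ; rewrite allr.
  have fr : frakn Q %| p.
    rewrite /frakn; case: ifP => _ //; apply: lcm_dvd => r rQ.
    by apply: div_gcd_dvd Q0 _; rewrite subn1 -nE; apply: allr.
  split => //.
    split => //; rewrite mod0n -SigE addn1; exact/eqP.
  case/primeP: (pp) => _ /(_ _ fr) /orP [/eqP -> | /eqP ->].
    by rewrite subnn dvd0n -lt0n Q0.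
  apply: contra p1; rewrite subn1 nE => h; exact: dvdn_mull.
- case=> [[_ W] fr ntd].
  have sqQ : forall r, prime r -> r %| Q -> ~~ (r * r %| Q).
    move=> r pr rQ; apply/negP => rr.
    have rin : r \in primes Q by rewrite mem_primes pr Q0.
    have rS : r %| \sum_(q <- primes Q) Q %/ q.
      rewrite (bigD1_seq r rin (primes_uniq _)) /=; apply: dvdn_add.
        by rewrite -(dvdn_pmul2r (prime_gt0 pr)) divnK.
      rewrite big_seq_cond; apply: dvdn_sum => s /andP [sQ sr].
      move: sQ; rewrite mem_primes => /and3P [ps _ sQd].
      by apply: dvd_div_other => //; rewrite eq_sym.
    have : r %| (\sum_(q <- primes Q) Q %/ q) + 1.
      by apply: dvdn_trans rQ _; rewrite /dvdn W mod0n.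
    by rewrite dvdn_addr // dvdn1 => /eqP r1; move: pr; rewrite r1.
  have tm : forall r, r \in primes Q -> (r - 1) %/ gcdn (r - 1) Q %| frakn Q.
    move=> r rQ; rewrite /frakn; case: eqP => [Q1|_]; first by rewrite Q1 in rQ.
    exact: lcm_sup.
  have rdiv : forall r, r \in primes Q -> r.-1 %| n.
    move=> r rQ; have h := dvdn_trans (tm r rQ) fr.
    rewrite nE -subn1 -(divnK (dvdn_gcdl (r - 1) Q)).
    exact: dvdn_mul h (dvdn_gcdr _ _).
  have key2 : ~~ (p %| Q) /\ ~~ (p.-1 %| Q).
    case/primeP: (pp) => _ /(_ _ fr) /orP [/eqP f1 | /eqP fp].
      have QL : Q \in goodL.
        apply: enumQ => // r pr rQ.
        have rin : r \in primes Q by rewrite mem_primes pr Q0.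
        have := tm r rin; rewrite f1 dvdn1 => /eqP h1.
        rewrite -subn1 -(divnK (dvdn_gcdl (r - 1) Q)) h1 mul1n; exact: dvdn_gcdr.
      by split; apply/negP => h; move/negP: pL; apply; apply: chk2_use QL pp _;
        rewrite h ?orbT.
    have np1 : ~~ (p.-1 %| Q) by move: ntd; rewrite fp subn1.
    split => //; apply/negP => h.
    have pin : p \in primes Q by rewrite mem_primes pp Q0 h.
    have := tm p pin; rewrite fp => d.
    case/primeP: (pp) => _ /(_ _ d) /orP [/eqP h1 | /eqP hp].
      apply: (negP np1); rewrite -subn1 -(divnK (dvdn_gcdl (p - 1) Q)) h1 mul1n.
      exact: dvdn_gcdr.
    have := leq_div (p - 1) (gcdn (p - 1) Q).
    by rewrite hp leqNgt subn1 ltn_predL p0.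
  case: key2 => pQ np1.
  have p1 : ~~ (p.-1 %| n) by rewrite nE Gauss_dvdr // coprimePn.
  have TS := T_split pp Q0 pQ; rewrite -nE (negbTE p1) add0n in TS.
  have SigE : \sum_(r <- primes Q) (if r.-1 %| n then Q %/ r else 0) =
     \sum_(r <- primes Q) Q %/ r by apply: eq_big_seq => r rQ; rewrite rdiv.
  rewrite SigE in TS.
  have hT : n %| T n + p.
    by rewrite TS -mulnSr {1}nE dvdn_pmul2l // -addn1 /dvdn W mod0n.
  split; first split => //.
    have e1 : S n n = S n n + (T n + p) %[mod n] by rewrite -modnDmr (eqP hT) addn0.
    by rewrite e1 addnA -modnDml (eqP K) add0n.
  split => //; by rewrite nE expnS expn1 dvdn_pmul2l.
Qed.
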